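(* Let $n,s,k$ be integers with $0\le s\le n$ and $n\ge k>1$. Then $F_{s,k}(n)=(-1)^k F_{n-s,k}(n)$.
   Context: For an integer $j\ge0$, $\binom{x}{j}=x(x-1)\cdots(x-j+1)/j!$ as a polynomial in $x$, and $\binom{x}{j}=0$ for $j<0$. For integers $s\ge1$, $k\ge1$, the Moser polynomial is $F_{s,k}(x)=\sum_{p=1}^{s}(-1)^{p-1}p^{k-1}\binom{x}{s-p}$; for integers $s<1$ set $F_{s,k}\equiv0$. *)

(* Defs.v *)
From HB Require Import structures.
From mathcomp Require Import all_boot all_order all_algebra.
Set Implicit Arguments. Unset Strict Implicit. Unset Printing Implicit Defensive.
Import Order.TTheory GRing.Theory Num.Theory.
Local Open Scope ring_scope.

Definition binpoly (j : nat) : {poly rat} :=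
  (j`!%:R)^-1 *: \prod_(i < j) ('X - (i%:R)%:P).

(* Moser polynomial F_{s,k}(x) = sum_{p=1}^s (-1)^(p-1) p^(k-1) binom(x, s-p);
   for s = 0 (i.e. s < 1) the sum is empty, so F = 0, matching the convention.
   In the range p in [1, s], s - p >= 0, so no negative-index binomial arises. *)
Definition moser (s k : nat) : {poly rat} :=
  \sum_(1 <= p < s.+1) ((-1) ^+ (p.-1) * (p ^ k.-1)%:R) *: binpoly (s - p).

(* Main.v *)
Require Import Defs.
From HB Require Import structures.
From mathcomp Require Import all_boot all_order all_algebra.
From mathcomp Require Import zify ring.
Import Num.Theory.
Import GRing.Theory.
Local Open Scope ring_scope.

Lemma prod_ff (n j : nat) :
  \prod_(i < j) ((n%:R : rat) - i%:R) = (n ^_ j)%:R.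
Proof.
elim: j => [|j IH]; first by rewrite big_ord0 ffactn0.
rewrite big_ord_recr /= IH ffactnSr natrM.
case: (leqP j n) => hj; first by rewrite natrB.
by rewrite ffact_small // !mul0r.
Qed.

Lemma binpolyE (j n : nat) : (binpoly j).[n%:R] = 'C(n, j)%:R.
Proof.
rewrite /binpoly hornerZ horner_prod.
under eq_bigr => i _ do rewrite hornerXsubC.
rewrite prod_ff -bin_ffact natrM mulrC -mulrA mulfV ?mulr1 //.
by rewrite pnatr_eq0 -lt0n fact_gt0.
Qed.
Definition S (n m : nat) (c : rat) (j : nat) : rat :=
  \sum_(q < m) (-1) ^+ q * ('C(n, q))%:R * (q%:R + c) ^+ j.

Lemma S_shift n m c j :
  S n m (c + 1) j = \sum_(i < j.+1) 'C(j, i)%:R * S n m c i.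
Proof.
rewrite /S.
under eq_bigr => q _ do rewrite addrA exprD1n mulr_sumr.
rewrite exchange_big /=; apply: eq_bigr => i _.
rewrite mulr_sumr; apply: eq_bigr => q _.
by rewrite -mulr_natr; ring.
Qed.

Lemma S_zero n : forall m c j, (j < n)%N -> (n < m)%N -> S n m c j = 0.
Proof.
elim: n => [//|n IH] m c j hj hm.
case: m hm => [//|m] hm.
have E : S n.+1 m.+1 c j = S n m.+1 c j - S n m (c + 1) j.
  rewrite /S big_ord_recl [in RHS]big_ord_recl /= !bin0 -addrA; congr (_ + _).
  rewrite -sumrB; apply: eq_bigr => i _.
  rewrite /bump /= binS natrD exprS add1n. have -> : (i.+1%:R : rat) = i%:R + 1 by rewrite -addn1 natrD. rewrite (addrAC _ 1 c) -addrA. set X := (_ ^+ j). set Y := (-1) ^+ i. ring.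
have E2 : S n m.+1 c j = S n m c j.
  by rewrite /S big_ord_recr /= bin_small // mulr0 mul0r addr0.
rewrite E E2 S_shift big_ord_recr /= binn mul1r opprD addrA addrAC subrr add0r.
rewrite big1 ?oppr0 // => i _.
have hi := ltn_ord i. rewrite IH ?mulr0 //; lia.
Qed.

Lemma sgn (a b : nat) : odd a = odd b -> (-1) ^+ a = (-1) ^+ b :> rat.
Proof. by move=> h; rewrite -signr_odd h signr_odd. Qed.

Definition T (n K s : nat) : rat :=
  \sum_(0 <= q < s) (-1) ^+ q * ('C(n, q))%:R * (q%:R - s%:R) ^+ K.

Lemma G_T n s k : (0 < k)%N ->
  (moser s k).[n%:R] = (-1) ^+ (s + k) * T n k.-1 s.
Proof.
move=> hk.
rewrite /moser horner_sum /T mulr_sumr.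
rewrite (big_addn 0 s.+1 1) subn1 /=.
rewrite big_nat_rev /=.
apply: eq_big_nat => q /andP [_ hq].
rewrite hornerZ binpolyE add0n.
have -> : (s - (s - q.+1 + 1) = q)%N by lia.
have -> : (s - q.+1 + 1 = s - q)%N by lia.
have -> : (q%:R - s%:R : rat) = - ((s - q)%N)%:R by rewrite natrB ?(ltnW hq) // opprB.
rewrite (exprNn ((s - q)%:R)) natrX.
have h : (-1) ^+ (s - q).-1 = (-1) ^+ (s + k) * (-1) ^+ q * (-1) ^+ k.-1 :> rat.
  by rewrite -!exprD; apply: sgn; lia.
rewrite h.

ring.
Qed.

Lemma T_refl n K s : (0 < K)%N -> (K < n)%N -> (s <= n)%N ->
  T n K s = (-1) ^+ (n + K + 1) * T n K (n - s).
Proof.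
move=> hK0 hKn hs.
have Z := S_zero n n.+1 (- s%:R) K hKn (ltnSn n).
rewrite /S -(big_mkord xpredT (fun q => (-1) ^+ q * (('C(n, q))%:R : rat) * (q%:R + - s%:R) ^+ K)) in Z.
have hsn : (s <= n.+1)%N by lia.
rewrite (@big_cat_nat _ _ _ s 0 n.+1 _ _ (leq0n s) hsn) /= in Z.
have hs1 : (s < n.+1)%N by lia.
rewrite (big_ltn hs1) /= in Z.
rewrite subrr expr0n (gtn_eqF hK0) mulr0 add0r in Z.
rewrite (big_addn 0 n.+1 s.+1) in Z.
rewrite [X in _ + X = _]big_nat_rev /= in Z.
have L : \sum_(0 <= i < n.+1 - s.+1)
       (-1) ^+ (0 + (n.+1 - s.+1) - i.+1 + s.+1) * ('C(n, 0 + (n.+1 - s.+1) - i.+1 + s.+1))%:R *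
       (((0 + (n.+1 - s.+1) - i.+1 + s.+1))%:R - s%:R : rat) ^+ K
     = (-1) ^+ (n + K) * T n K (n - s).
  rewrite /T mulr_sumr subSS; apply: eq_big_nat => r /andP [_ hr].
  have -> : (0 + (n - s) - r.+1 + s.+1 = n - r)%N by lia.
  rewrite bin_sub; last by lia.
  have -> : ((n - r)%:R - s%:R : rat) = - (r%:R - (n - s)%:R).
    by rewrite !natrB; [rewrite opprB addrAC|lia|lia].
  rewrite (exprNn (r%:R - _)).
  have h : (-1) ^+ (n - r) * (-1) ^+ K = (-1) ^+ (n + K) * (-1) ^+ r :> rat.
    by rewrite -!exprD; apply: sgn; lia.
  set A := (r%:R - _) ^+ K.
  transitivity (((-1) ^+ (n - r) * (-1) ^+ K) * ('C(n, r)%:R * A)); first by ring.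
  rewrite h. ring.
rewrite L in Z.
change (T n K s + (-1) ^+ (n + K) * T n K (n - s) = 0) in Z.
move/eqP: Z; rewrite addr_eq0 => /eqP ->.
rewrite addn1 exprSr; ring.
Qed.

Theorem mainTheorem19 (n s k : nat) (hs : (s <= n)%N) (hk1 : (1 < k)%N) (hkn : (k <= n)%N) :
  (moser s k).[n%:R] = (-1) ^+ k * (moser (n - s) k).[n%:R].
Proof.
have hk0 : (0 < k)%N by lia.
rewrite !G_T // (T_refl n k.-1 s); [|lia|lia|lia].
rewrite !mulrA -!exprD; congr (_ * _); apply: sgn; lia.
Qed.
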